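(* For every positive integer $n$ and every $t\in\{1,2,3\}$, $$M(n,t)\le \sum_{\mathbf{x}\in\{0,1\}^n}\frac{1}{|\Phi_t(\mathbf{x})|}.$$
   Context: A grain pattern of length $n$ is a subset $E\subseteq\{2,\dots,n\}$ containing no two consecutive integers. For such $E$, the map $\phi_E:\{0,1\}^n\to\{0,1\}^n$ sends $\mathbf{x}=(x_1,\dots,x_n)$ to $\mathbf{y}$ with $y_j=x_{j-1}$ if $j\in E$ and $y_j=x_j$ otherwise. For $t\ge0$, $\mathcal{E}_{n,t}$ is the set of grain patterns of length $n$ with $|E|\le t$, and $\Phi_t(\mathbf{x})=\{\phi_E(\mathbf{x}):E\in\mathcal{E}_{n,t}\}$. Two words $\mathbf{x}_1,\mathbf{x}_2$ are $t$-confusable if $\Phi_t(\mathbf{x}_1)\cap\Phi_t(\mathbf{x}_2)\ne\emptyset$. A code $\mathcal{C}\subseteq\{0,1\}^n$ is $t$-grain-correcting if no two distinct codewords are $t$-confusable. $M(n,t)$ is the maximum cardinality of a $t$-grain-correcting code of length $n$. *)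

(* Defs.v *)
From mathcomp Require Import all_boot all_order all_algebra.
Set Implicit Arguments. Unset Strict Implicit. Unset Printing Implicit Defensive.

(* Words of length n: x = (x_1,...,x_n) is represented by x : {ffun 'I_n -> bool},
   with position j (1-indexed) stored at index j-1 (0-indexed). *)
Definition word (n : nat) := {ffun 'I_n -> bool}.

(* A grain pattern E ⊆ {2,...,n} with no two consecutive integers.
   In 0-indexed form: E : {set 'I_n}, index 0 (position 1) not in E,
   and no two elements i, j of E with j = i + 1. *)
Definition grain_pattern (n : nat) (E : {set 'I_n}) : bool :=
  [forall i : 'I_n, (i \in E) ==> (0 < (i : nat))%N] &&
  [forall i : 'I_n, forall j : 'I_n,
      ((i \in E) && (j \in E)) ==> ((j : nat) != (i : nat).+1)].

(* phi_E(x)_j = x_{j-1} if j ∈ E, and x_j otherwise.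
   insubd j (j-1) is the index j-1 (always < n); for j ∈ E we have j > 0. *)
Definition phi (n : nat) (E : {set 'I_n}) (x : word n) : word n :=
  [ffun j : 'I_n => if j \in E then x (insubd j (j : nat).-1) else x j].

Definition grain_patterns (n t : nat) : {set {set 'I_n}} :=
  [set E : {set 'I_n} | grain_pattern E && (#|E| <= t)%N].

Definition Phi (n t : nat) (x : word n) : {set word n} :=
  [set phi E x | E in grain_patterns n t].

Definition confusable (n t : nat) (x1 x2 : word n) : bool :=
  [exists y, (y \in Phi t x1) && (y \in Phi t x2)].

Definition grain_correcting (n t : nat) (C : {set word n}) : bool :=
  [forall x1 in C, forall x2 in C, (x1 != x2) ==> ~~ confusable t x1 x2].

Definition M (n t : nat) : nat :=
  \max_(C : {set word n} | grain_correcting t C) #|C|.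

(* Main.v *)
Require Import Defs.
From mathcomp Require Import all_boot all_order all_algebra.
Set Implicit Arguments. Unset Strict Implicit. Unset Printing Implicit Defensive.
Section Abs.
Variables e f : nat -> bool.
Hypothesis he0 : e 0 = false.
Hypothesis hee : forall k, ~~ (e k && e k.+1).
Hypothesis hf0 : f 0 = false.
Hypothesis hff : forall k, ~~ (f k && f k.+1).
Hypothesis hD : forall k, (f k.+1 && e k.+1) ==> e k.

Definition K k := [&& e k, f k.-1, f k.+1 & ~~ e k.-2].
Definition Es k := (e k && ~~ K k) || K k.+1.
Definition Rs k := [&& f k, ~~ e k.-1 & ~~ K k.+1] || (e k && f k.+1).

Ltac specat k := generalize (hee k) (hff k) (hD k).
Ltac bs := rewrite /=; try solve [simpl; intros; done]; match goal with
  | |- context [e ?p] => case: (e p); bs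
  | |- context [f ?p] => case: (f p); bs end.

Lemma Es0 : Es 0 = false.
Proof. by rewrite /Es /K /= he0 hf0 /= andbF. Qed.

Lemma EsS k : ~~ (Es k && Es k.+1).
Proof.
rewrite /Es /K.
case: k => [|[|k]] /=; rewrite ?he0 ?hf0 /=.
- specat 0; specat 1; specat 2; rewrite ?he0 ?hf0; bs.
- specat 0; specat 1; specat 2; specat 3; rewrite ?he0 ?hf0; bs.
- specat k; specat k.+1; specat k.+2; specat k.+3;  specat k.+4; bs.
Qed.

Lemma Rs0 : Rs 0 = false.
Proof. by rewrite /Rs /K /= he0 hf0 /=. Qed.

Ltac gen k := case: k => [|[|[|k]]] /=; rewrite ?he0 ?hf0 /=;
  [ specat 0; specat 1; specat 2; specat 3; specat 4; rewrite ?he0 ?hf0; bs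
  | specat 0; specat 1; specat 2; specat 3; specat 4; rewrite ?he0 ?hf0; bs
  | specat 0; specat 1; specat 2; specat 3; specat 4; specat 5; rewrite ?he0 ?hf0; bs
  | specat k; specat k.+1; specat k.+2; specat k.+3;  specat k.+4; specat k.+4.+1; specat k.+4.+2; bs].

Lemma RsS k : ~~ (Rs k && Rs k.+1).
Proof. rewrite /Rs /K; gen k. Qed.

Lemma KqE k : [&& 0 < k, Es k.-1 & Rs k] = K k.
Proof. rewrite /Es /Rs /K; gen k. Qed.

Lemma E0E k : (Es k && ~~ K k.+1) || K k = e k.
Proof. rewrite /Es /K; gen k. Qed.

Lemma R0E k : Rs k || K k.+1 = (f k && ~~ e k.-1) || (e k && f k.+1).
Proof. rewrite /Rs /K; gen k. Qed.

Lemma E1E k : (((f k && ~~ e k.-1) || (e k && f k.+1)) && ~~ e k) ||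
   [&& 0<k, ((f k.-1 && ~~ e k.-2) || (e k.-1 && f k)) & e k.-1] = f k.
Proof. gen k. Qed.

Lemma Es_bound k : Es k ==> (e k || e k.+1).
Proof. rewrite /Es /K; bs. Qed.

Lemma Rs_bound k : Rs k ==> (f k || e k).
Proof. rewrite /Rs /K; bs. Qed.

Variable b : nat -> bool.
Hypothesis heb : forall k, e k ==> b k.
Hypothesis hfb : forall k, f k.+1 ==> (b k.+1 (+) e k.+1 (+) e k).

Ltac specb k := generalize (hee k) (hff k) (heb k) (hfb k).
Ltac bs2 := rewrite /=; try solve [simpl; intros; done]; match goal with
  | |- context [e ?p] => case: (e p); bs2
  | |- context [f ?p] => case: (f p); bs2
  | |- context [b ?p] => case: (b p); bs2 end.

Lemma Es_b k : Es k ==> b k.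
Proof.
rewrite /Es /K; case: k => [|[|k]] /=; rewrite ?he0 ?hf0 /=.
- specb 0; specb 1; rewrite ?he0 ?hf0; bs2.
- specb 0; specb 1; specb 2; rewrite ?he0 ?hf0; bs2.
- specb k; specb k.+1; specb k.+2; specb k.+3; bs2.
Qed.

Lemma Rs_b k : Rs k ==> b k.
Proof.
rewrite /Rs /K; case: k => [|[|k]] /=; rewrite ?he0 ?hf0 /=.
- done.
- specb 0; specb 1; specb 2; rewrite ?he0 ?hf0; bs2.
- specb k; specb k.+1; specb k.+2; specb k.+3; bs2.
Qed.
End Abs.

Section Main.
Variable n : nat.
Implicit Types (E F : {set 'I_n}) (x : word n) (k : nat) (t : nat).

Definition mm (E : {set 'I_n}) k := [exists i in E, val i == k].

Lemma mmE E (i : 'I_n) : mm E i = (i \in E).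
Proof.
apply/existsP/idP => [[j /andP[jE /eqP/val_inj <-]] //|iE].
by exists i; rewrite iE eqxx.
Qed.

Lemma mm_lt E k : mm E k -> k < n.
Proof. by case/existsP=> i /andP[_ /eqP <-]; apply: ltn_ord. Qed.

Lemma mm_ex E k : mm E k -> exists2 i : 'I_n, i \in E & val i = k.
Proof. by case/existsP=> i /andP[iE /eqP <-]; exists i. Qed.

Lemma set_ext (A B : {set 'I_n}) : (forall k, mm A k = mm B k) -> A = B.
Proof. by move=> H; apply/setP=> i; rewrite -!mmE H. Qed.

Lemma sub_ext (A B : {set 'I_n}) : (forall k, mm A k -> mm B k) -> A \subset B.
Proof. by move=> H; apply/subsetP=> i; rewrite -!mmE; apply: H. Qed.

Lemma sub_mm (A B : {set 'I_n}) k : A \subset B -> mm A k -> mm B k.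
Proof. by move=> /subsetP sAB /mm_ex [i iA <-]; rewrite mmE sAB. Qed.

Definition mk (p : nat -> bool) : {set 'I_n} := [set i : 'I_n | p i].

Lemma mm_mk p k : mm (mk p) k = (k < n) && p k.
Proof.
case: (ltnP k n) => [kn|kn] /=.
  by rewrite (mmE _ (Ordinal kn)) inE.
by apply/negbTE/negP=> /mm_lt; rewrite ltnNge kn.
Qed.

Lemma mm_mkb (p : nat -> bool) k : (forall j, p j -> j < n) -> mm (mk p) k = p k.
Proof. by move=> H; rewrite mm_mk; case pk: (p k); rewrite ?andbF ?andbT ?H. Qed.

Lemma mm_setI A B k : mm (A :&: B) k = mm A k && mm B k.
Proof.
case: (ltnP k n) => [kn|kn].
  by rewrite !(mmE _ (Ordinal kn)) inE.
have F C : mm C k = false by apply/negbTE/negP=> /mm_lt; rewrite ltnNge kn.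
by rewrite !F.
Qed.

Lemma gpE E : grain_pattern E -> mm E 0 = false /\ forall k, ~~ (mm E k && mm E k.+1).
Proof.
case/andP=> /forallP H1 /forallP H2; split.
  apply/negbTE/negP=> /mm_ex [i iE i0]; move: (H1 i); rewrite iE i0 /=; done.
move=> k; apply/negP=> /andP[/mm_ex [i iE ik] /mm_ex [j jE jk]].
by move: (H2 i) => /forallP /(_ j); rewrite iE jE jk ik eqxx.
Qed.

Lemma gpI E : mm E 0 = false -> (forall k, ~~ (mm E k && mm E k.+1)) -> grain_pattern E.
Proof.
move=> H0 H; apply/andP; split; apply/forallP => i.
  apply/implyP=> iE; rewrite lt0n; apply/negP=> /eqP i0.
  by move: H0; rewrite -i0 mmE iE.
apply/forallP=> j; apply/implyP=> /andP[iE jE]; apply/negP=> /eqP ji.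
by move: (H i); rewrite !mmE iE -ji mmE jE.
Qed.


Definition xa (x : word n) (k : nat) : bool := if insub k is Some i then x i else false.

Lemma xaE x (i : 'I_n) : xa x i = x i.
Proof. by rewrite /xa valK. Qed.

Lemma xa_ge x k : n <= k -> xa x k = false.
Proof. by move=> kn; rewrite /xa insubF // ltnNge kn. Qed.

Lemma mm_ge E k : n <= k -> mm E k = false.
Proof. by move=> kn; apply/negbTE/negP=> /mm_lt; rewrite ltnNge kn. Qed.

Lemma xa_insubd (x : word n) (i : 'I_n) k : k < n -> x (insubd i k) = xa x k.
Proof. by move=> kn; rewrite /insubd /xa; case: insubP => [j _ _ //|]; rewrite kn. Qed.

Definition Bx (x : word n) := mk (fun k => (0 < k) && (xa x k != xa x k.-1)).

Lemma phi_at E x k : k < n -> xa (phi E x) k = if mm E k then xa x k.-1 else xa x k.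
Proof.
move=> kn; have -> : k = Ordinal kn by [].
rewrite [LHS]xaE mmE /phi ffunE; case: ifP => _; last by rewrite xaE.
by rewrite xa_insubd // (leq_ltn_trans (leq_pred k) kn).
Qed.

Lemma flip E x : E \subset Bx x -> forall k, xa (phi E x) k = xa x k (+) mm E k.
Proof.
move=> sEB k; case: (ltnP k n) => kn; last by rewrite !xa_ge // mm_ge.
rewrite phi_at //; case Ek: (mm E k); last by rewrite addbF.
move: (sub_mm sEB Ek); rewrite mm_mk kn /= => /andP[_].
by case: (xa x k); case: (xa x k.-1).
Qed.

Definition PB t (B : {set 'I_n}) := [set E in grain_patterns n t | E \subset B].

Lemma PBP t B E : (E \in PB t B) = [&& grain_pattern E, #|E| <= t & E \subset B].
Proof. by rewrite !inE andbA. Qed.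

Lemma phi_restrict E x : grain_pattern E -> phi E x = phi (E :&: Bx x) x.
Proof.
move=> /gpE [E0 _]; apply/ffunP=> j; rewrite !ffunE inE.
case jE: (j \in E) => //=; case jB: (j \in Bx x) => //.
have j0 : 0 < j.
  by rewrite lt0n; apply/negP=> /eqP j0; move: E0; rewrite -j0 mmE jE.
move: jB; rewrite -mmE mm_mk ltn_ord j0 /= => /negbT; rewrite negbK => /eqP.
by rewrite xaE xa_insubd // (leq_ltn_trans (leq_pred j) (ltn_ord j)).
Qed.

Lemma Phi_eq t x : Phi t x = [set phi E x | E in PB t (Bx x)].
Proof.
apply/eqP; rewrite eqEsubset; apply/andP; split; apply/subsetP=> y /imsetP [E].
  rewrite inE => /andP[gE cE] ->; rewrite (phi_restrict x gE).
  apply/imsetP; exists (E :&: Bx x) => //.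
  rewrite PBP subsetIr andbT; apply/andP; split.
    case: (gpE gE) => E0 EE; apply: gpI; first by rewrite mm_setI E0.
    by move=> k; rewrite !mm_setI; move: (EE k); case: (mm E k); case: (mm E k.+1); case: (mm (Bx x) k); case: (mm (Bx x) k.+1).
  by apply: leq_trans cE; apply: subset_leq_card; apply: subsetIl.
rewrite PBP => /and3P[gE cE _] ->; apply/imsetP; exists E => //.
by rewrite inE gE cE.
Qed.

Lemma phi_inj t x : {in PB t (Bx x) &, injective (fun E : {set 'I_n} => phi E x)}.
Proof.
move=> E F; rewrite !PBP => /and3P[_ _ sE] /and3P[_ _ sF] eq.
apply: set_ext=> k; have := flip sE k; rewrite eq (flip sF k).
by case: (xa x k); case: (mm E k); case: (mm F k).
Qed.

Lemma card_Phi t x : #|Phi t x| = #|PB t (Bx x)|.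
Proof. by rewrite Phi_eq card_in_imset //; apply: phi_inj. Qed.

Definition B' (B E : {set 'I_n}) := mk (fun k => (0 < k) && (mm B k (+) mm E k (+) mm E k.-1)).

Lemma Bx_phi E x : E \subset Bx x -> Bx (phi E x) = B' (Bx x) E.
Proof.
move=> sE; apply: set_ext => k; rewrite !mm_mk.
case: (ltnP k n) => //= kn; case: k kn => //= k kn.
rewrite !flip //.
by case: (xa x k); case: (xa x k.+1); case: (mm E k); case: (mm E k.+1).
Qed.


Lemma andb_lt (b : bool) j : (b -> j < n) -> (j < n) && b = b.
Proof. by case: b => [/(_ isT) ->|]; rewrite ?andbF. Qed.

Section Comb.
Variables (t : nat) (B : {set 'I_n}).

Definition D : {set {set 'I_n} * {set 'I_n}} :=
  [set p | (p.1 \in PB t B) && (p.2 \in PB t (B' B p.1))].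

Definition Psi (p : {set 'I_n} * {set 'I_n}) :=
  (mk (Es (mm p.1) (mm p.2)), mk (Rs (mm p.1) (mm p.2))).

Definition Kq_ (A C : {set 'I_n}) k := [&& 0 < k, mm A k.-1 & mm C k].
Definition P0 (A C : {set 'I_n}) k := mm C k || Kq_ A C k.+1.
Definition E0s (A C : {set 'I_n}) :=
  mk (fun k => (mm A k && ~~ Kq_ A C k.+1) || Kq_ A C k).
Definition E1s (A C : {set 'I_n}) :=
  mk (fun k => (P0 A C k && ~~ mm (E0s A C) k) ||
               [&& 0 < k, P0 A C k.-1 & mm (E0s A C) k.-1]).
Definition Psi' (q : {set 'I_n} * {set 'I_n}) := (E0s q.1 q.2, E1s q.1 q.2).

Lemma Dfacts E F : (E, F) \in D ->
  [/\ mm E 0 = false, (forall k, ~~ (mm E k && mm E k.+1)), mm F 0 = false,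
      (forall k, ~~ (mm F k && mm F k.+1)) &
      (forall k, (mm F k.+1 && mm E k.+1) ==> mm E k)].
Proof.
rewrite inE /= !PBP => /andP[/and3P[gE _ sE] /and3P[gF _ sF]].
case: (gpE gE) => he0 hee; case: (gpE gF) => hf0 hff; split => // k.
apply/implyP=> /andP[fk ek]; have h1 := sub_mm sF fk; have h2 := sub_mm sE ek; move: h1 h2 ek.
by rewrite mm_mk /=; case/andP=> _; case: (mm E k); case: (mm E k.+1); case: (mm B k.+1).
Qed.

Lemma Dfacts2 E F : (E, F) \in D ->
  [/\ (forall k, mm E k ==> mm B k),
      (forall k, mm F k.+1 ==> (mm B k.+1 (+) mm E k.+1 (+) mm E k)),
      #|E| <= t & #|F| <= t].
Proof.
rewrite inE /= !PBP => /andP[/and3P[gE cE sE] /and3P[gF cF sF]].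
split => // k; apply/implyP.
  exact: sub_mm.
by move/(sub_mm sF); rewrite mm_mk /= => /andP[].
Qed.

Lemma mmEs E F k : mm (mk (Es (mm E) (mm F))) k = Es (mm E) (mm F) k.
Proof.
apply: mm_mkb => j /(implyP (Es_bound _ _ j)) /orP[/mm_lt //|/mm_lt].
exact: ltnW.
Qed.

Lemma mmRs E F k : mm (mk (Rs (mm E) (mm F))) k = Rs (mm E) (mm F) k.
Proof. by apply: mm_mkb => j /(implyP (Rs_bound _ _ j)) /orP[] /mm_lt. Qed.

Lemma Psi_in p : p \in D -> Psi p \in setX (PB t B) (PB t B).
Proof.
case: p => E F pD.
case: (Dfacts pD) => he0 hee hf0 hff hD.
case: (Dfacts2 pD) => heb hfb cE cF.
rewrite inE /= !PBP; apply/andP; split; apply/and3P; split.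
- apply: gpI; first by rewrite mmEs Es0.
  by move=> k; rewrite !mmEs EsS.
- apply: leq_trans cE.
  pose g (i : 'I_n) := if K (mm E) (mm F) i then insubd i i.-1 else i.
  apply: leq_trans (leq_imset_card g E); apply: subset_leq_card.
  apply/subsetP=> j; rewrite inE /Es => /orP[/andP[ej nK]|Kj].
    by apply/imsetP; exists j; [rewrite -mmE | rewrite /g (negbTE nK)].
  have := Kj; rewrite /K => /and4P[/mm_ex[i iE ij] _ _ _].
  apply/imsetP; exists i => //; rewrite /g ij Kj; apply: val_inj.
  by rewrite val_insubd /= ltn_ord.
- by apply: sub_ext => k; rewrite mmEs => /(implyP (Es_b he0 hee hf0 hff heb hfb k)).
- apply: gpI; first by rewrite mmRs Rs0.
  by move=> k; rewrite !mmRs RsS.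
- apply: leq_trans cF.
  pose g (i : 'I_n) := if mm E i.-1 then insubd i i.-1 else i.
  apply: leq_trans (leq_imset_card g F); apply: subset_leq_card.
  apply/subsetP=> j; rewrite inE /Rs => /orP[/and3P[fj nE _]|/andP[ej /mm_ex[i iF ij]]].
    by apply/imsetP; exists j; [rewrite -mmE | rewrite /g (negbTE nE)].
  apply/imsetP; exists i => //; rewrite /g ij /= ej; apply: val_inj.
  by rewrite val_insubd /= ltn_ord.
- by apply: sub_ext => k; rewrite mmRs => /(implyP (Rs_b he0 hee hf0 hff heb hfb k)).
Qed.

Lemma Psi_can : {in D, cancel Psi Psi'}.
Proof.
case=> E F pD.
case: (Dfacts pD) => he0 hee hf0 hff hD.
rewrite /Psi /Psi' /=.
set A := mk _; set C := mk _.
have mA k : mm A k = Es (mm E) (mm F) k by apply: mmEs.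
have mC k : mm C k = Rs (mm E) (mm F) k by apply: mmRs.
have KqA k : Kq_ A C k = K (mm E) (mm F) k.
  by rewrite /Kq_ mA mC (KqE he0 hee hf0 hff hD).
have E0A : E0s A C = E.
  apply: set_ext => k; rewrite mm_mk !KqA mA (E0E he0 hee hf0 hff hD).
  by case ek: (mm E k); rewrite ?andbF // (mm_lt ek).
rewrite E0A; congr (_, _); apply: set_ext => k.
rewrite mm_mk /P0 E0A !mC !KqA.
rewrite (R0E he0 hee hf0 hff hD) (R0E he0 hee hf0 hff hD).
have H := E1E he0 hee hf0 hff hD k.
by case: k H => [|k] /= H; rewrite H; apply: andb_lt => /mm_lt.
Qed.

Lemma comb : \sum_(E in PB t B) #|PB t (B' B E)| <= #|PB t B| ^ 2.
Proof.
have -> : \sum_(E in PB t B) #|PB t (B' B E)| = #|D|.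
  rewrite -sum1_card.
  transitivity (\sum_(E in PB t B) \sum_(F in PB t (B' B E)) 1).
    by apply: eq_bigr => E _; rewrite sum1_card.
  rewrite pair_big_dep; apply: eq_bigl => p; rewrite !inE /=.
  by rewrite andbA.
rewrite -(card_in_imset (can_in_inj Psi_can)) expnS expn1 -cardsX.
apply: subset_leq_card; apply/subsetP => q /imsetP [p pD ->]; exact: Psi_in.
Qed.

End Comb.

End Main.

Lemma key n t (x : word n) : \sum_(y in Phi t x) #|Phi t y| <= #|Phi t x| ^ 2.
Proof.
rewrite {1}Phi_eq big_imset /=; last exact: phi_inj.
rewrite card_Phi.
have -> : \sum_(E in PB t (Bx x)) #|Phi t (phi E x)| =
          \sum_(E in PB t (Bx x)) #|PB t (B' (Bx x) E)|.
  apply: eq_bigr => E; rewrite PBP => /and3P[_ _ sE].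
  by rewrite card_Phi Bx_phi.
exact: comb.
Qed.

Lemma gp0 n : grain_pattern (set0 : {set 'I_n}).
Proof.
have H k : mm (set0 : {set 'I_n}) k = false.
  by apply/negbTE/negP=> /mm_ex [i]; rewrite inE.
by apply: gpI => // k; rewrite !H.
Qed.

Lemma Phi_self n t (x : word n) : x \in Phi t x.
Proof.
apply/imsetP; exists set0; first by rewrite inE gp0 cards0.
by apply/ffunP=> j; rewrite ffunE inE.
Qed.

Lemma Phi_pos n t (x : word n) : 0 < #|Phi t x|.
Proof. by apply/card_gt0P; exists x; apply: Phi_self. Qed.

From mathcomp Require Import ring.
Import Order.TTheory GRing.Theory Num.Theory.
Local Open Scope ring_scope.

Lemma amhm (a k : rat) : 0 < a -> 0 < k -> 2 / k - a / k ^+ 2 <= a^-1.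
Proof.
move=> a0 k0; rewrite -subr_ge0.
have -> : a^-1 - (2 / k - a / k ^+ 2) = (a - k) ^+ 2 / (a * k ^+ 2).
  by field; rewrite ?mulf_neq0 ?expf_neq0 ?lt0r_neq0.
by rewrite divr_ge0 ?sqr_ge0 // mulr_ge0 ?sqr_ge0 // ltW.
Qed.

Lemma one_le n t (x : word n) : 1 <= \sum_(y in Phi t x) (#|Phi t y|%:R)^-1 :> rat.
Proof.
set k := #|Phi t x|.
have k0 : 0 < k%:R :> rat by rewrite ltr0n Phi_pos.
apply: le_trans (ler_sum _ (fun y _ => amhm (a := #|Phi t y|%:R) _ k0)); last first.
  by move=> y _; rewrite ltr0n Phi_pos.
rewrite sumrB sumr_const -mulr_suml -natr_sum.
have Hs := key t x.
rewrite -/k.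
have -> : (2 / k%:R) *+ k = 2 :> rat.
  by rewrite -mulr_natr divfK // lt0r_neq0.
rewrite lerBrDr addrC -lerBrDr.
have -> : (2 - 1 : rat) = 1 by rewrite -addrA subrr addr0.
rewrite ler_pdivrMr ?exprn_gt0 // mul1r -natrX ler_nat.
exact: Hs.
Qed.

Lemma code_bound n t (C : {set word n}) : grain_correcting t C ->
  #|C|%:R <= \sum_(x : word n) ((#|Phi t x|)%:R)^-1 :> rat.
Proof.
move=> gc.
have -> : (#|C|%:R : rat) = \sum_(c in C) 1 by rewrite sumr_const.
apply: le_trans (ler_sum _ (fun c _ => one_le t c)) _.
under eq_bigr do rewrite big_mkcond.
rewrite exchange_big /=; apply: ler_sum => y _.
rewrite -big_mkcondr /=.
set w := (#|Phi t y|%:R)^-1.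
have w0 : 0 <= w by rewrite invr_ge0 ler0n.
have -> : \sum_(c in C | y \in Phi t c) w = w *+ #|[pred c in C | y \in Phi t c]|.
  by rewrite -sumr_const; apply: eq_bigl => c; rewrite !inE.
have : (#|[pred c in C | y \in Phi t c]| <= 1)%N.
  apply/card_le1_eqP => c1 c2; rewrite !inE => /andP[c1C y1] /andP[c2C y2].
  apply/eqP; apply: contraT => neq; rewrite eq_sym in neq.
  move/forallP: gc => /(_ c1); rewrite c1C /= => /forallP /(_ c2); rewrite c2C /=.
  by move/implyP/(_ neq) => /existsPn /(_ y); rewrite y1 y2.
by case: #|_| => [|[|//]] _; rewrite ?mulr0n ?mulr1n.
Qed.

Theorem theorem3p2 (n t : nat) (hn : (0 < n)%N) (ht : (1 <= t <= 3)%N) :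
  (M n t)%:R <= \sum_(x : word n) ((#|Phi t x|)%:R)^-1 :> rat.
Proof.
rewrite /M; apply: (big_ind (fun m : nat => (m%:R : rat) <= _)).
- by apply: sumr_ge0 => x _; rewrite invr_ge0 ler0n.
- move=> a b ha hb; case/orP: (leq_total a b) => h; [have -> : maxn a b = b by apply/maxn_idPr | have -> : maxn a b = a by apply/maxn_idPl]; done.
- by move=> C; apply: code_bound.
Qed.
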